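(* Each of the following graphs is geodesic-transitive: the Hamming graph $H(k,m)$ ($m\ge2$), the halved $k$-cube $\tfrac12 H(k,2)$, the folded $k$-cube $\bar H(k,2)$, and (for $k$ even) the halved folded $k$-cube $\tfrac12\bar H(k,2)$.
   Context: $H(k,m)$ has vertex set $\{0,1,\dots,m-1\}^k$, two $k$-tuples adjacent iff they differ in exactly one coordinate; $H(k,2)$ is the $k$-cube. The halved $k$-cube is the graph induced by the distance-$2$ graph of $H(k,2)$ on one of its two bipartition classes. The folded $k$-cube is obtained by identifying each vertex $x$ of $H(k,2)$ with its complement $x+(1,\dots,1)$, two classes adjacent iff they contain adjacent vertices. For $k$ even the folded $k$-cube is bipartite and the halved folded $k$-cube is the graph induced by its distance-$2$ graph on one bipartition class. A geodesic of length $\ell$ is a vertex sequence $(v_0,\dots,v_\ell)$ with consecutive vertices adjacent and $d(v_0,v_\ell)=\ell$; a graph is geodesic-transitive if its automorphism group is transitive on geodesics of each length. *)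

(* Defs.v *)
From mathcomp Require Import all_boot all_fingroup.
Set Implicit Arguments. Unset Strict Implicit. Unset Printing Implicit Defensive.

Definition walk_len (T : finType) (e : rel T) (x y : T) (n : nat) : bool :=
  [exists p : n.-tuple T, path e x p && (last x p == y)].

Definition dist_eq (T : finType) (e : rel T) (x y : T) (n : nat) : bool :=
  walk_len e x y n && [forall m : 'I_n, ~~ walk_len e x y m].

Definition geodesic (T : finType) (e : rel T) (x : T) (p : seq T) (l : nat) : Prop :=
  [/\ path e x p, size p = l & dist_eq e x (last x p) l].

Definition is_aut (T : finType) (e : rel T) (g : {perm T}) : Prop :=
  forall u v, e (g u) (g v) = e u v.

Definition geodesic_transitive (T : finType) (e : rel T) : Prop :=
  forall (l : nat) (x y : T) (p q : seq T),
    geodesic e x p l -> geodesic e y q l ->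
    exists g : {perm T}, [/\ is_aut e g, g x = y & map g p = q].

Definition hamming_adj (k m : nat) : rel {ffun 'I_k -> 'I_m} :=
  fun x y => #|[set i | x i != y i]| == 1.

Definition cube (k : nat) := {ffun 'I_k -> bool}.
Definition cube_adj (k : nat) : rel (cube k) :=
  fun x y => #|[set i | x i != y i]| == 1.
Definition weight (k : nat) (x : cube k) : nat := #|[set i | x i]|.

Definition even_cube (k : nat) := {x : cube k | ~~ odd (weight x)}.
Definition halved_cube_adj (k : nat) : rel (even_cube k) :=
  fun x y => dist_eq (@cube_adj k) (val x) (val y) 2.

Definition cube_compl (k : nat) (x : cube k) : cube k := [ffun i => ~~ x i].

(* folded k-cube: vertices are the classes {x, x + (1,...,1)}, two classes
   adjacent iff they contain adjacent vertices. *)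
Definition folded_vtx (k : nat) :=
  {A : {set cube k} | [exists x : cube k, A == [set x; cube_compl x]]}.
Definition folded_adj (k : nat) : rel (folded_vtx k) :=
  fun A B => [exists u in val A, exists v in val B, cube_adj u v].

Definition even_folded (k : nat) :=
  {A : folded_vtx k | [exists x in val A, ~~ odd (weight x)]}.
Definition halved_folded_adj (k : nat) : rel (even_folded k) :=
  fun A B => dist_eq (@folded_adj k) (val A) (val B) 2.

(* Main.v *)
Require Import Defs.
From mathcomp Require Import all_boot all_fingroup zify.
Set Implicit Arguments. Unset Strict Implicit. Unset Printing Implicit Defensive.

Section Walks.
Variables (T : finType) (e : rel T).

Lemma walkP x y n : reflect (exists p : seq T, [/\ size p = n, path e x p & last x p = y])
  (walk_len e x y n).
Proof.
apply: (iffP existsP) => [[p /andP[hp /eqP hl]] | [p [hs hp hl]]].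
  by exists (val p); rewrite size_tuple.
have hs' : size p == n by rewrite hs.
by exists (Tuple hs'); rewrite /= hp hl eqxx.
Qed.

Lemma aut_inv (g : {perm T}) : is_aut e g -> is_aut e (g^-1)%g.
Proof. by move=> hg u v; rewrite -hg !permKV. Qed.

Lemma aut_mul (g h : {perm T}) : is_aut e g -> is_aut e h -> is_aut e (g * h)%g.
Proof. by move=> hg hh u v; rewrite !permM hh hg. Qed.

Lemma path_aut (g : {perm T}) x p : is_aut e g -> path e (g x) (map g p) = path e x p.
Proof. by move=> hg; elim: p x => //= y p IH x; rewrite hg IH. Qed.

Lemma walk_aut1 (g : {perm T}) x y n : is_aut e g -> walk_len e x y n -> walk_len e (g x) (g y) n.
Proof.
move=> hg /walkP [p [hs hp hl]]; apply/walkP; exists (map g p).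
by rewrite size_map path_aut // last_map hl.
Qed.

Lemma walk_aut (g : {perm T}) x y n : is_aut e g -> walk_len e (g x) (g y) n = walk_len e x y n.
Proof.
move=> hg; apply/idP/idP; last exact: walk_aut1.
by move/(walk_aut1 (aut_inv hg)); rewrite !permK.
Qed.

Lemma dist_aut (g : {perm T}) x y n : is_aut e g -> dist_eq e (g x) (g y) n = dist_eq e x y n.
Proof.
move=> hg; rewrite /dist_eq walk_aut //; congr (_ && _).
by apply: eq_forallb => m; rewrite walk_aut.
Qed.

Lemma map_mul (g h : {perm T}) p : map (g * h)%g p = map h (map g p).
Proof. by elim: p => //= x p ->; rewrite permM. Qed.

Lemma map_K (g : {perm T}) p : map (g^-1)%g (map g p) = p.
Proof. by elim: p => //= x p ->; rewrite permK. Qed.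

End Walks.

Section Metric.
Variables (T : finType) (e : rel T) (D : T -> T -> nat).
Hypothesis D0 : forall x, D x x = 0.
Hypothesis Dpos : forall x y, D x y = 0 -> x = y.
Hypothesis Dstep : forall x y z, e y z -> D x z <= (D x y).+1.
Hypothesis Dex : forall x y, 0 < D x y -> exists z, e x z /\ D z y < D x y.

Lemma path_D x u p : path e u p -> D x (last u p) <= D x u + size p.
Proof.
elim: p u => [|v p IH] u /=; first by rewrite addn0.
case/andP=> huv hp; have := IH _ hp; have := Dstep x huv; lia.
Qed.

Lemma walk_D x y n : walk_len e x y n -> D x y <= n.
Proof. by case/walkP=> p [hs hp hl]; have := path_D x hp; rewrite D0 hl hs. Qed.

Lemma D_walk x y : walk_len e x y (D x y).
Proof.
have [n hn] := ubnP (D x y); elim: n x hn => // n IH x hn.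
case: (posnP (D x y)) => [h0|hpos].
  by rewrite h0 (Dpos h0); apply/walkP; exists [::].
have [z [hxz hz]] := Dex hpos.
have hzn : D z y < n by lia.
have /walkP [p [hs hp hl]] := IH z hzn.
have hw : walk_len e x y (D z y).+1.
  by apply/walkP; exists (z :: p); rewrite /= hs hxz hp hl.
have := walk_D hw => hle.
by have -> : D x y = (D z y).+1 by lia.
Qed.

Lemma dist_eqP x y n : dist_eq e x y n = (D x y == n).
Proof.
apply/idP/eqP => [/andP[hw /forallP hm] | <-].
  have h1 := walk_D hw; apply/eqP; rewrite eqn_leq h1 leqNgt /=; apply/negP => hlt.
  by move: (hm (Ordinal hlt)); rewrite /= D_walk.
rewrite /dist_eq D_walk /=; apply/forallP => m; apply/negP => hw.
by have := walk_D hw; have := ltn_ord m; lia.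
Qed.

Lemma D_tri x y z : D x z <= D x y + D y z.
Proof.
have /walkP [p [hs hp hl]] := D_walk x y.
have /walkP [q [hs' hq hl']] := D_walk y z.
have hw : walk_len e x z (D x y + D y z).
  apply/walkP; exists (p ++ q); rewrite size_cat cat_path last_cat hs hs' hp hl hq hl'.
  by [].
exact: walk_D hw.
Qed.

Definition grel x := [rel u v | e u v && (D x v == (D x u).+1)].

Lemma path_grel x u p : path (grel x) u p -> D x (last u p) = D x u + size p.
Proof.
elim: p u => [|v p IH] u /=; first by rewrite addn0.
by case/andP=> /andP[_ /eqP h] /IH ->; rewrite h addSnnS.
Qed.

Lemma path_grel2 x u p : path e u p -> D x (last u p) = D x u + size p -> path (grel x) u p.
Proof.
elim: p u => [|v p IH] u //= /andP[huv hp] hD.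
have h1 := path_D x hp; have h2 := Dstep x huv.
have hv : D x v = (D x u).+1 by lia.
rewrite /= huv hv eqxx /=; apply: IH => //; lia.
Qed.

Lemma geoP x p l : geodesic e x p l <-> size p = l /\ path (grel x) x p.
Proof.
split.
  case=> hp hs hd; split => //; apply: path_grel2 => //.
  by move: hd; rewrite dist_eqP D0 hs => /eqP.
case=> hs hp; split => //.
  by apply: sub_path hp => u v /andP[].
by rewrite dist_eqP path_grel // D0 hs.
Qed.

Lemma D_aut (g : {perm T}) x y : is_aut e g -> D (g x) (g y) = D x y.
Proof. by move=> hg; have := dist_aut x y (D x y) hg; rewrite !dist_eqP eqxx => /eqP. Qed.

Variables (base : T) (canon : nat -> T).
Hypothesis VT : forall x, exists g : {perm T}, is_aut e g /\ g x = base.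
Hypothesis c0 : canon 0 = base.
Hypothesis LOC : forall l a, D base (canon l) = l -> e (canon l) a -> D base a = l.+1 ->
  exists h : {perm T}, [/\ is_aut e h, h base = base,
     forall i, i <= l -> h (canon i) = canon i & h a = canon l.+1].

Lemma last_canon l : last base (mkseq (fun i => canon i.+1) l) = canon l.
Proof. by case: l => [|l] //; rewrite mkseqS last_rcons. Qed.

Lemma red l x p : size p = l -> path (grel x) x p ->
  exists g : {perm T}, [/\ is_aut e g, g x = base & map g p = mkseq (fun i => canon i.+1) l].
Proof.
elim/last_ind: p l => [|p a IH] l.
  move=> <- _ /=; have [g [hg hgx]] := VT x; by exists g.
rewrite size_rcons rcons_path => <- /andP[hp hpa].
have [g [hg hgx hgp]] := IH _ erefl hp.
have hgz : g (last x p) = canon (size p) by rewrite -last_map hgx hgp last_canon.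
have hDz : D x (last x p) = size p by rewrite path_grel // D0.
move: hpa => /= /andP[hza /eqP hDa].
have h1 : D base (canon (size p)) = size p by rewrite -hgz -hgx D_aut.
have h2 : e (canon (size p)) (g a) by rewrite -hgz hg.
have h3 : D base (g a) = (size p).+1 by rewrite -hgx D_aut // hDa hDz.
have [h [hh hhb hhfix hha]] := LOC h1 h2 h3.
exists (g * h)%g; split.
- exact: aut_mul.
- by rewrite permM hgx hhb.
rewrite map_mul map_rcons hgp map_rcons mkseqS -hha; congr (rcons _ _).
rewrite /mkseq -map_comp; apply/eq_in_map => i; rewrite mem_iota => /andP[_ hi] /=.
exact: hhfix.
Qed.

Theorem canon_gt : geodesic_transitive e.
Proof.
move=> l x y p q /geoP [hp1 hp2] /geoP [hq1 hq2].
have [g1 [hg1 hx hp]] := red hp1 hp2.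
have [g2 [hg2 hy hq]] := red hq1 hq2.
exists (g1 * g2^-1)%g; split.
- by apply: aut_mul => //; exact: aut_inv.
- by rewrite permM hx -hy permK.
by rewrite map_mul hp -hq map_K.
Qed.
End Metric.

Lemma perm_seq (T : finType) (s t : seq T) : uniq s -> uniq t -> size s = size t ->
  exists g : {perm T}, map g s = t /\ forall x, x \notin s -> x \notin t -> g x = x.
Proof.
elim: s t => [|x s IH] [|y t] //=.
  by move=> _ _ _; exists 1%g; split=> // z _ _; rewrite perm1.
move=> /andP[hx hs] /andP[hy ht] [hst].
have [g [hg hfix]] := IH t hs ht hst.
exists (g * tperm (g x) y)%g; split.
  rewrite permM tpermL; congr (_ :: _).
  rewrite -[RHS]hg; apply/eq_in_map => z hz; rewrite permM tpermD //.
    by rewrite (inj_eq perm_inj); apply: contraNneq hx => ->.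
  by apply: contraNneq hy => ->; rewrite -hg map_f.
move=> z; rewrite !in_cons !negb_or => /andP[hzx hzs] /andP[hzy hzt].
rewrite permM (hfix z) // tpermD //; last by rewrite eq_sym.
apply: contraNneq hzx => hgx; apply/eqP; apply: (@perm_inj _ g); by rewrite (hfix z hzs hzt) hgx.
Qed.


Section Ham.
Variables (k : nat) (A : finType).
Notation V := {ffun 'I_k -> A}.

Definition hd (x y : V) := #|[set i | x i != y i]|.
Definition hadj : rel V := fun x y => hd x y == 1.

Lemma hd_sym x y : hd x y = hd y x.
Proof. by rewrite /hd; apply: eq_card => i; rewrite !inE eq_sym. Qed.

Lemma hd_xx x : hd x x = 0.
Proof. by apply/eqP; rewrite cards_eq0; apply/eqP/setP => i; rewrite !inE eqxx. Qed.

Lemma hd0 x y : hd x y = 0 -> x = y.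
Proof.
move/eqP; rewrite cards_eq0 => /eqP h; apply/ffunP => i.
have : (i \in [set i | x i != y i]) = (i \in set0) by rewrite h.
by rewrite !inE => /negbFE/eqP.
Qed.

Lemma hd_le x y : hd x y <= k.
Proof. by have := max_card [set i | x i != y i]; rewrite card_ord. Qed.

Lemma hd_tri x y z : hd x z <= hd x y + hd y z.
Proof.
rewrite /hd; set S1 := [set i | x i != y i]; set S2 := [set i | y i != z i].
have hs : [set i | x i != z i] \subset S1 :|: S2.
  apply/subsetP => i; rewrite !inE; case: (x i =P y i) => [->|] //=.
have := subset_leq_card hs; have := cardsUI S1 S2; lia.
Qed.

Definition upd (x y : V) (S : {set 'I_k}) : V := [ffun j => if j \in S then y j else x j].

Lemma hd_upd1 (x y : V) (S : {set 'I_k}) : S \subset [set i | x i != y i] -> hd x (upd x y S) = #|S|.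
Proof.
move=> /subsetP hS; rewrite /hd; apply: eq_card => i; rewrite !inE ffunE.
case: ifP => hi; last by rewrite eqxx.
by have := hS i hi; rewrite inE => ->.
Qed.

Lemma hd_upd2 (x y : V) (S : {set 'I_k}) : S \subset [set i | x i != y i] -> hd (upd x y S) y = hd x y - #|S|.
Proof.
move=> hS; rewrite /hd.
have -> : [set i | upd x y S i != y i] = [set i | x i != y i] :\: S.
  by apply/setP => i; rewrite !inE ffunE; case: ifP => //=; rewrite eqxx.
by rewrite cardsD (setIidPr hS).
Qed.

Lemma hstep x y z : hadj y z -> hd x z <= (hd x y).+1.
Proof. by move=> /eqP h; have := hd_tri x y z; rewrite h addn1. Qed.

Lemma hex x y : 0 < hd x y -> exists z, hadj x z /\ hd z y < hd x y.
Proof.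
move=> hpos; have [i hi] : exists i, i \in [set i | x i != y i].
  by apply/set0Pn; rewrite -card_gt0.
have hS : [set i] \subset [set i | x i != y i] by rewrite sub1set.
exists (upd x y [set i]); rewrite /hadj hd_upd1 // hd_upd2 // cards1; split => //.
lia.
Qed.

Lemma hdist x y n : dist_eq hadj x y n = (hd x y == n).
Proof. exact: (@dist_eqP _ hadj hd hd_xx hd0 hstep hex). Qed.

Definition cfun (s : {perm 'I_k}) (u : V) : V := [ffun j => u (s j)].
Lemma cfun_inj s : injective (cfun s).
Proof.
move=> u v h; apply/ffunP => i; have := congr1 (fun w : V => w (s^-1%g i)) h.
by rewrite !ffunE permKV.
Qed.
Definition cperm s : {perm V} := perm (@cfun_inj s).
Lemma cpermE s u : cperm s u = cfun s u. Proof. by rewrite permE. Qed.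

Lemma hd_cfun s u v : hd (cfun s u) (cfun s v) = hd u v.
Proof.
by rewrite /hd -(card_preimset [set i | u i != v i] (@perm_inj _ s)); apply: eq_card => i; rewrite !inE !ffunE.

Qed.

Definition vfun (t : 'I_k -> {perm A}) (u : V) : V := [ffun j => t j (u j)].
Lemma vfun_inj t : injective (vfun t).
Proof.
move=> u v h; apply/ffunP => i; have := congr1 (fun w : V => w i) h.
by rewrite !ffunE => /perm_inj.
Qed.
Definition vperm t : {perm V} := perm (@vfun_inj t).
Lemma vpermE t u : vperm t u = vfun t u. Proof. by rewrite permE. Qed.

Lemma hd_vfun t u v : hd (vfun t u) (vfun t v) = hd u v.
Proof. by rewrite /hd; apply: eq_card => i; rewrite !inE !ffunE (inj_eq perm_inj). Qed.

Lemma hd_aut (g : {perm V}) : (forall u v, hd (g u) (g v) = hd u v) -> is_aut hadj g.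
Proof. by move=> h u v; rewrite /hadj h. Qed.

Variables (a0 a1 : A).
Hypothesis a01 : a0 != a1.

Definition hbase : V := [ffun _ => a0].
Definition hcanon (n : nat) : V := [ffun j : 'I_k => if j < n then a1 else a0].

Lemma hVT x : exists g : {perm V}, is_aut hadj g /\ g x = hbase.
Proof.
exists (vperm (fun j => tperm (x j) a0)); split.
  by apply: hd_aut => u v; rewrite !vpermE hd_vfun.
by rewrite vpermE; apply/ffunP => j; rewrite !ffunE tpermL.
Qed.

Lemma hc0 : hcanon 0 = hbase.
Proof. by apply/ffunP => j; rewrite !ffunE ltn0. Qed.

Lemma hLOC l a : hd hbase (hcanon l) = l -> hadj (hcanon l) a -> hd hbase a = l.+1 ->
  exists h : {perm V}, [/\ is_aut hadj h, h hbase = hbase,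
     forall i, i <= l -> h (hcanon i) = hcanon i & h a = hcanon l.+1].
Proof.
move=> hD /cards1P [j /setP hj] hDa.
have ha : forall i, i != j -> a i = hcanon l i.
  move=> i hij; have := hj i; rewrite !inE (negbTE hij) => /negbFE/eqP.
  by move=> ->.
have haj : hcanon l j != a j by have := hj j; rewrite !inE eqxx.
have hlj : l <= j.
  rewrite leqNgt; apply/negP => hjl.
  have hsub : [set i | hbase i != a i] \subset [set i | hbase i != hcanon l i].
    apply/subsetP => i; rewrite !inE !ffunE.
    case: (eqVneq i j) => [->|hij]; first by rewrite hjl eq_sym (negbTE a01).
    by rewrite ha // ffunE.
  by have := subset_leq_card hsub; rewrite -/(hd _ _) -/(hd _ _) hD hDa ltnn.
have hlk : l < k by apply: leq_ltn_trans hlj (ltn_ord j).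
set L : 'I_k := Ordinal hlk.
have hcj : hcanon l j = a0 by rewrite ffunE ltnNge hlj.
set v := a j.
have hv0 : v != a0 by rewrite -hcj eq_sym.
set t := fun i : 'I_k => if i == L then tperm v a1 else 1%g.
have ht0 : forall i, t i a0 = a0.
  move=> i; rewrite /t; case: ifP => _; last by rewrite perm1.
  by rewrite tpermD // eq_sym.
exists (cperm (tperm j L) * vperm t)%g; split.
- apply: hd_aut => u w; by rewrite !permM !cpermE !vpermE hd_vfun hd_cfun.
- by rewrite permM cpermE vpermE; apply/ffunP => i; rewrite !ffunE ht0.
- move=> i' hi'; rewrite permM cpermE vpermE; apply/ffunP => i; rewrite !ffunE.
  have hjl : (j < i') = false by rewrite ltnNge (leq_trans hi' hlj).
  have hLl : (L < i') = false by rewrite ltnNge hi'.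
  have -> : (tperm j L i < i') = (i < i').
    by case: tpermP => [->|->|] //; rewrite hjl hLl.
  rewrite /t; case: eqP => [->|]; last by rewrite perm1.
  by rewrite hLl tpermD // eq_sym.
- rewrite permM cpermE vpermE; apply/ffunP => i; rewrite !ffunE /t.
  case: tpermP => [->|->|].
  + case: (eqVneq j L) => [hjL|hjL].
      by rewrite -hjL -/v tpermL hjL /= ltnSn.
    rewrite perm1 ha; last by rewrite eq_sym.
    rewrite ffunE ltnn ltnS leqNgt.
    suff -> : l < j by [].
    rewrite ltn_neqAle hlj andbT; apply: contra hjL => /eqP hh.
    by apply/eqP; apply: val_inj; rewrite /= hh.
  + by rewrite eqxx -/v tpermL /= ltnSn.
  + move=> /eqP hij /eqP hiL; rewrite (negbTE hiL) perm1 ha // ffunE.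
    have hil : (i == l :> nat) = false.
      by apply/negbTE; apply: contra hiL => /eqP hh; apply/eqP; apply: val_inj; rewrite /= hh.
    have -> : (i < l.+1) = (i < l) by rewrite ltnS leq_eqVlt hil.
    by [].
Qed.

Theorem ham_gt : geodesic_transitive hadj.
Proof. exact: (canon_gt hd_xx hd0 hstep hex hVT hc0 hLOC). Qed.
End Ham.
Arguments cperm {k A} s.
Arguments vperm {k A} t.


Lemma sum_lt k n : \sum_(j < k) (j < n : nat) = minn n k.
Proof.
elim: k => [|k IH]; first by rewrite big_ord0 minn0.
rewrite big_ord_recr /= IH; case: (ltnP k n) => h; lia.
Qed.

Section Cube.
Variable k : nat.
Notation C := (cube k).

Definition zero : C := [ffun _ => false].
Definition cv (n : nat) : C := [ffun j : 'I_k => j < n].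
Definition ctfun (t u : C) : C := [ffun i => u i (+) t i].
Notation compl := (@cube_compl k).

Lemma cardsum (P : pred 'I_k) : #|[set i | P i]| = \sum_i P i.
Proof.
rewrite -sum1_card big_mkcond /=; apply: eq_bigr => i _.
by rewrite inE; case: (P i).
Qed.

Lemma wE (x : C) : weight x = hd x zero.
Proof. by apply: eq_card => i; rewrite !inE ffunE; case: (x i). Qed.

Lemma hd_parity (x y : C) : odd (hd x y) = odd (weight x) (+) odd (weight y).
Proof.
rewrite /hd /weight !cardsum.
have h : \sum_i (x i != y i : nat) + (\sum_i (x i && y i : nat)).*2
       = \sum_i (x i : nat) + \sum_i (y i : nat).
  rewrite (@big_morph _ _ double 0 addn 0 addn doubleD (erefl 0)) -!big_split /=.
  by apply: eq_bigr => i _; case: (x i); case: (y i).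
by rewrite -oddD -h oddD odd_double addbF.
Qed.

Lemma hd_compl (x y : C) : hd (compl x) y = k - hd x y.
Proof.
rewrite /hd.
have -> : [set i | compl x i != y i] = ~: [set i | x i != y i].
  by apply/setP => i; rewrite !inE ffunE; case: (x i); case: (y i).
by rewrite cardsCs setCK card_ord.
Qed.

Lemma hd_complr (x y : C) : hd x (compl y) = k - hd x y.
Proof. by rewrite hd_sym hd_compl hd_sym. Qed.

Lemma hd_compl2 (x y : C) : hd (compl x) (compl y) = hd x y.
Proof. by apply: eq_card => i; rewrite !inE !ffunE; case: (x i); case: (y i). Qed.

Lemma complK (x : C) : compl (compl x) = x.
Proof. by apply/ffunP => i; rewrite !ffunE negbK. Qed.

Lemma w_compl (x : C) : weight (compl x) = k - weight x.
Proof.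
rewrite !wE hd_compl; congr (_ - _).
Qed.

Lemma ctfun_inj t : injective (ctfun t).
Proof.
move=> u v h; apply/ffunP => i; have := congr1 (fun w : C => w i) h.
by rewrite !ffunE => /addIb.
Qed.
Definition ctr t : {perm C} := perm (@ctfun_inj t).
Lemma ctrE t u : ctr t u = ctfun t u. Proof. by rewrite permE. Qed.

Lemma hd_ctr t u v : hd (ctr t u) (ctr t v) = hd u v.
Proof. by rewrite !ctrE; apply: eq_card => i; rewrite !inE !ffunE; case: (u i); case: (v i); case: (t i). Qed.

Lemma ctr_compl t u : ctr t (compl u) = compl (ctr t u).
Proof. by rewrite !ctrE; apply/ffunP => i; rewrite !ffunE addNb. Qed.

Lemma ctr_self t : ctr t t = zero.
Proof. by rewrite ctrE; apply/ffunP => i; rewrite !ffunE addbb. Qed.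

Lemma w_ctr t u : weight (ctr t u) = hd u t.
Proof. by rewrite ctrE; apply: eq_card => i; rewrite !inE !ffunE; case: (u i); case: (t i). Qed.

Lemma odd_ctr t u : odd (weight (ctr t u)) = odd (weight u) (+) odd (weight t).
Proof. by rewrite w_ctr hd_parity. Qed.

Lemma cperm_compl (s : {perm 'I_k}) (u : C) : cperm s (compl u) = compl (cperm s u).
Proof. by rewrite !cpermE; apply/ffunP => i; rewrite !ffunE. Qed.

Lemma cfun_zero (s : {perm 'I_k}) : cfun s zero = zero.
Proof. by apply/ffunP => i; rewrite !ffunE. Qed.

Lemma w_cperm (s : {perm 'I_k}) (u : C) : weight (cperm s u) = weight u.
Proof. by rewrite !wE cpermE -{1}(cfun_zero s) hd_cfun. Qed.

Lemma w_cv n : weight (cv n) = minn n k.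
Proof.
rewrite /weight cardsum -sum_lt; apply: eq_bigr => i _; by rewrite ffunE.
Qed.

Lemma cv0 : cv 0 = zero.
Proof. by apply/ffunP => i; rewrite !ffunE. Qed.

Lemma wsplit (x w : C) (S : {set 'I_k}) : [set i | x i != w i] \subset S ->
  weight w + #|S :&: [set i | x i]| = weight x + #|S :&: [set i | w i]|.
Proof.
move=> /subsetP hS.
have h1 := cardsID S [set i | w i]; have h2 := cardsID S [set i | x i].
have e : [set i | w i] :\: S = [set i | x i] :\: S.
  apply/setP => i; rewrite !inE; case: (boolP (i \in S)) => //= hi.
  by case: (x i =P w i) => [->//|/eqP hne]; case/negP: hi; apply: hS; rewrite inE.
rewrite /weight -h1 -h2 e (setIC S [set i | x i]) (setIC S [set i | w i]).
move: #|[set i | w i] :&: S| #|[set i | x i] :\: S| #|[set i | x i] :&: S| => a b c; lia.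
Qed.

Lemma cfun_cv (s : {perm 'I_k}) n i : (forall m : 'I_k, m < n -> s m = m) -> i <= n -> cfun s (cv i) = cv i.
Proof.
move=> hs hin; apply/ffunP => m; rewrite !ffunE.
case: (ltnP m n) => hm; first by rewrite hs.
have : n <= s m.
  rewrite leqNgt; apply/negP => hsm.
  have := hs _ hsm => /perm_inj hh; by move: hm; rewrite -hh leqNgt hsm.
move=> h2; rewrite ltnNge (leq_trans hin h2) ltnNge (leq_trans hin hm) //.
Qed.

Lemma loc_common n (w : C) (S : {set 'I_k}) : [set i | cv n i != w i] = S ->
  #|S| + n <= weight w -> (forall m, m \in S -> n <= m) /\ w = [ffun m : 'I_k => (m < n) || (m \in S)].
Proof.
move=> hS hw.
have hSi : [set i | cv n i != w i] =i S by rewrite hS.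
have hwm : forall m, m \notin S -> w m = (m < n).
  move=> m hm; have := hSi m; rewrite !inE (negbTE hm) ffunE => /negbFE/eqP.
  by move=> <-.
have hsplit := wsplit (x := cv n) (w := w) (S := S); rewrite hS subxx in hsplit.
have hsplit' := hsplit isT.
have hge : forall m, m \in S -> n <= m.
  move=> m hm; rewrite leqNgt; apply/negP => hmn.
  have hwm' : w m = false.
    have := hSi m; rewrite !inE hm ffunE hmn; by case: (w m).
  have h1 : #|S :&: [set i | w i]| < #|S|.
    apply: proper_card; rewrite properEneq subsetIl andbT.
    apply/negP => /eqP/setP hh; have := hh m; rewrite !inE hm hwm'; by [].
  have := w_cv n; have := geq_minl n k; lia.
split => //; apply/ffunP => m; rewrite ffunE.
case: (boolP (m \in S)) => hm; last by rewrite hwm // orbF.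
have := hSi m; rewrite !inE hm ffunE ltnNge (hge m hm) /=.
by case: (w m).
Qed.

Lemma loc1 n (w : C) : hd (cv n) w = 1 -> n < weight w ->
  n < k /\ exists s : {perm 'I_k}, (forall i, i <= n -> cfun s (cv i) = cv i) /\ cfun s w = cv n.+1.
Proof.
move=> /eqP/cards1P [j hj] hw.
have := loc_common hj; rewrite cards1 add1n => /(_ hw) [hge ->].
have hnj := hge j (set11 j).
have hnk : n < k by apply: leq_trans (ltn_ord j); rewrite ltnS.
split => //; set L : 'I_k := Ordinal hnk.
exists (tperm j L); split.
  move=> i hi; apply: cfun_cv hi => m hm; rewrite tpermD //.
    by apply/negP => /eqP hh; move: hm; rewrite -hh ltnNge hnj.
  by apply/negP => /eqP hh; move: hm; rewrite -hh ltnn.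
apply/ffunP => m; rewrite !ffunE inE.
case: tpermP => [->|->|].
- case: (eqVneq j L) => [hjL|hjL].
    by rewrite orbT hjL /= ltnSn.
  have hnj' : n < j.
    rewrite ltn_neqAle hnj andbT; apply: contra hjL => /eqP hh.
    by apply/eqP; apply: val_inj; rewrite /= hh.
  rewrite orbF /= ltnn.
  by rewrite ltnS leqNgt hnj'.
- by rewrite eqxx orbT /= ltnSn.
- move=> /eqP hmj /eqP hmL; rewrite (negbTE hmj) orbF.
  have hml : (m == n :> nat) = false.
    by apply/negbTE; apply: contra hmL => /eqP hh; apply/eqP; apply: val_inj; rewrite /= hh.
  have -> : (m < n.+1) = (m < n) by rewrite ltnS leq_eqVlt hml.
  by [].
Qed.

Lemma perm_ge (s : {perm 'I_k}) n (m : 'I_k) : (forall m : 'I_k, m < n -> s m = m) -> n <= m -> n <= s m.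
Proof.
move=> hs hm; rewrite leqNgt; apply/negP => hsm.
have := hs _ hsm => /perm_inj hh; by move: hm; rewrite -hh leqNgt hsm.
Qed.

Lemma loc2 n (w : C) : hd (cv n) w = 2 -> n.+2 <= weight w ->
  n.+1 < k /\ exists s : {perm 'I_k}, (forall i, i <= n -> cfun s (cv i) = cv i) /\ cfun s w = cv n.+2.
Proof.
move=> /eqP/cards2P [j [j' [hjj' hS]]] hw.
have := loc_common hS; rewrite cards2 hjj' add2n => /(_ hw) [hge ->].
have hnj := hge j (set21 j j'); have hnj' := hge j' (set22 j j').
have hne : (j : nat) <> j'.
  by move=> h; move: hjj'; rewrite (val_inj h) eqxx.
have hnk : n.+1 < k by have := ltn_ord j; have := ltn_ord j'; lia.
have hnk0 : n < k by lia.
set L0 : 'I_k := Ordinal hnk0; set L1 : 'I_k := Ordinal hnk.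
have hL : L0 != L1 by apply/negP => /eqP/(congr1 val) /=; lia.
have hu1 : uniq [:: L0; L1] by rewrite /= inE hL.
have hu2 : uniq [:: j; j'] by rewrite /= inE hjj'.
have [s [hs hfix]] := @perm_seq _ [:: L0; L1] [:: j; j'] hu1 hu2 erefl.
case: hs => hs0 hs1.
have hsn : forall m : 'I_k, m < n -> s m = m.
  move=> m hm; apply: hfix; rewrite !inE; apply/norP; split; apply/eqP => hh;
    move: hm; rewrite hh /= ?ltnn ?ltnNge ?leqnSn ?hnj ?hnj' //.
split => //; exists s; split; first by move=> i hi; exact: cfun_cv hsn hi.
apply/ffunP => m; rewrite !ffunE !inE.
case: (ltnP m n) => hmn.
  by rewrite hsn // hmn (ltn_trans hmn) // ltnW.
case: (eqVneq m L0) => [->|h0]; first by rewrite hs0 eqxx orbT /= ltnS leqnSn.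
case: (eqVneq m L1) => [->|h1]; first by rewrite hs1 eqxx !orbT /= ltnSn.
have hm2 : n.+2 <= m.
  have : (m : nat) <> n by move=> hh; move: h0; rewrite (_ : m = L0) ?eqxx //; apply: val_inj.
  have : (m : nat) <> n.+1 by move=> hh; move: h1; rewrite (_ : m = L1) ?eqxx //; apply: val_inj.
  lia.
have hsm := perm_ge hsn hmn.
rewrite ltnNge hsm /= ltnNge hm2 /=.
rewrite -hs0 -hs1 !(inj_eq perm_inj) (negbTE h0) (negbTE h1) //.
Qed.

End Cube.


Section Halved.
Variable k : nat.
Notation C := (cube k).
Notation E := (even_cube k).

Lemma hc_adjE (x y : E) : halved_cube_adj x y = (hd (val x) (val y) == 2).
Proof. exact: hdist. Qed.

Definition Dh (x y : E) := hd (val x) (val y) %/ 2.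

Lemma ev_hd (x y : E) : ~~ odd (hd (val x) (val y)).
Proof. by rewrite hd_parity (negbTE (valP x)) (negbTE (valP y)). Qed.

Lemma Dh0 x : Dh x x = 0. Proof. by rewrite /Dh hd_xx. Qed.

Lemma Dhpos x y : Dh x y = 0 -> x = y.
Proof.
rewrite /Dh => h; apply: val_inj; apply: hd0.
have := ev_hd x y; move: h; case: (hd _ _) => [|[|n]] //=; lia.
Qed.

Lemma Dhstep x y z : halved_cube_adj y z -> Dh x z <= (Dh x y).+1.
Proof.
rewrite hc_adjE /Dh => /eqP h; have := hd_tri (val x) (val y) (val z); rewrite h; lia.
Qed.

Lemma Dhex x y : 0 < Dh x y -> exists z, halved_cube_adj x z /\ Dh z y < Dh x y.
Proof.
rewrite /Dh => hpos.
have hpos2 : 1 < hd (val x) (val y) by lia.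
rewrite /hd in hpos2.
set S0 := [set i | val x i != val y i] in hpos2 *.
have [i hi] : exists i, i \in S0 by apply/set0Pn; rewrite -card_gt0; lia.
have [i' hi'] : exists i', i' \in S0 :\ i.
  apply/set0Pn; rewrite -card_gt0; have := cardsD1 i S0; rewrite hi; lia.
move: hi'; rewrite !inE => /andP[hii' hi'S].
have hS : [set i; i'] \subset S0 by rewrite subUset !sub1set hi inE hi'S.
have hc2 : #|[set i; i']| = 2 by rewrite cards2 eq_sym hii'.
set z0 := upd (val x) (val y) [set i; i'].
have hz0 : ~~ odd (weight z0).
  have := hd_parity (val x) z0; rewrite /z0 hd_upd1 // hc2 /= (negbTE (valP x)) /=.
  by move=> <-.
exists (exist _ z0 hz0); rewrite hc_adjE /= /z0 hd_upd1 // hd_upd2 // hc2; split => //.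
change ((hd (val x) (val y) - 2) %/ 2 < hd (val x) (val y) %/ 2); rewrite /hd -/S0; lia.
Qed.

Section Lift.
Variable g : {perm C}.
Hypothesis hg : forall u, ~~ odd (weight u) -> ~~ odd (weight (g u)).
Hypothesis hgd : forall u v, hd (g u) (g v) = hd u v.
Definition efun (u : E) : E := exist _ (g (val u)) (hg (valP u)).
Lemma efun_inj : injective efun.
Proof. by move=> u v /(congr1 val) /= /perm_inj /val_inj. Qed.
Definition elift : {perm E} := perm efun_inj.
Lemma elift_val u : val (elift u) = g (val u). Proof. by rewrite permE. Qed.
Lemma elift_aut : is_aut (@halved_cube_adj k) elift.
Proof. by move=> u v; rewrite !hc_adjE !elift_val hgd. Qed.
End Lift.

Lemma zero_ev : ~~ odd (weight (zero k)). Proof. by rewrite wE hd_xx. Qed.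
Definition hcbase : E := exist _ (zero k) zero_ev.
Definition nn i := if 2 * i <= k then 2 * i else 0.
Lemma nn_ev i : ~~ odd (weight (cv k (nn i))).
Proof.
rewrite w_cv /nn; case: ifP => h; last by rewrite min0n.
by rewrite (minn_idPl h) oddM.
Qed.
Definition hccanon i : E := exist _ (cv k (nn i)) (nn_ev i).

Lemma hcVT x : exists g : {perm E}, is_aut (@halved_cube_adj k) g /\ g x = hcbase.
Proof.
have hg : forall u, ~~ odd (weight u) -> ~~ odd (weight (ctr (val x) u)).
  by move=> u hu; rewrite odd_ctr (negbTE hu) (negbTE (valP x)).
exists (elift hg); split; first by apply: elift_aut => u v; rewrite hd_ctr.
by apply: val_inj; rewrite elift_val ctr_self.
Qed.

Lemma hcc0 : hccanon 0 = hcbase.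
Proof. by apply: val_inj; rewrite /= /nn muln0 leq0n cv0. Qed.

Lemma hcLOC l a : Dh hcbase (hccanon l) = l -> halved_cube_adj (hccanon l) a ->
  Dh hcbase a = l.+1 ->
  exists h : {perm E}, [/\ is_aut (@halved_cube_adj k) h, h hcbase = hcbase,
     forall i, i <= l -> h (hccanon i) = hccanon i & h a = hccanon l.+1].
Proof.
rewrite /Dh /= hc_adjE /= !(hd_sym (zero k)) -!wE w_cv => hl /eqP ha hal.
have h2l : 2 * l <= k.
  move: hl; rewrite /nn; case: ifP => [h _ //|h]; rewrite min0n => hl.
  by move: h; rewrite -hl div0n muln0.
have hnl : nn l = 2 * l by rewrite /nn h2l.
rewrite hnl in ha.
have hw : (2 * l).+2 <= weight (sval a) by lia.
have [hk [s [hs1 hs2]]] := loc2 ha hw.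
have hg : forall u : C, ~~ odd (weight u) -> ~~ odd (weight (cperm s u)) by move=> u; rewrite w_cperm.
have hgd : forall u v : C, hd (cperm s u) (cperm s v) = hd u v by move=> u v; rewrite !cpermE hd_cfun.
exists (elift hg); split.
- exact: elift_aut.
- by apply: val_inj; rewrite elift_val cpermE /= cfun_zero.
- move=> i hi; apply: val_inj; rewrite elift_val cpermE /=.
  have -> : nn i = 2 * i by rewrite /nn; have -> : 2 * i <= k by lia.
  by apply: hs1; lia.
- apply: val_inj; rewrite elift_val cpermE /= hs2 /nn.
  have -> : 2 * l.+1 <= k by lia.
  by congr cv; lia.
Qed.

Theorem halved_gt : geodesic_transitive (@halved_cube_adj k).
Proof. exact: (canon_gt Dh0 Dhpos Dhstep Dhex hcVT hcc0 hcLOC). Qed.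
End Halved.


Section Folded.
Variable k : nat.
Notation C := (cube k).
Notation FV := (folded_vtx k).
Notation compl := (@cube_compl k).

Lemma mkc_proof (x : C) : [exists y : C, [set x; compl x] == [set y; compl y]].
Proof. by apply/existsP; exists x. Qed.
Definition mkc (x : C) : FV := exist _ [set x; compl x] (mkc_proof x).

Lemma mkcP (A : FV) : exists x, A = mkc x.
Proof.
case: A => S hS; have /existsP [x /eqP hx] := hS; exists x; apply: val_inj => /=.
exact: hx.
Qed.

Lemma mkc_compl x : mkc (compl x) = mkc x.
Proof. by apply: val_inj => /=; rewrite complK setUC. Qed.

Lemma mkc_eq x y : mkc x = mkc y -> y = x \/ y = compl x.
Proof.
move/(congr1 val) => /= h.
have : y \in [set x; compl x] by rewrite h set21.
by rewrite !inE => /orP[] /eqP; auto.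
Qed.

Definition dl (x y : C) := minn (hd x y) (k - hd x y).

Lemma dl_complL x y : dl (compl x) y = dl x y.
Proof. by rewrite /dl hd_compl; have := hd_le x y; lia. Qed.
Lemma dl_complR x y : dl x (compl y) = dl x y.
Proof. by rewrite /dl hd_complr; have := hd_le x y; lia. Qed.

Definition rep (A : FV) : C := xchoose (existsP (valP A)).
Lemma rep_spec A : A = mkc (rep A).
Proof. by apply: val_inj => /=; apply/eqP; exact: (xchooseP (existsP (valP A))). Qed.

Lemma rep_mkc x : rep (mkc x) = x \/ rep (mkc x) = compl x.
Proof. by apply: mkc_eq; rewrite -rep_spec. Qed.

Definition Df (A B : FV) := dl (rep A) (rep B).
Lemma Df_mkc x y : Df (mkc x) (mkc y) = dl x y.
Proof.
by rewrite /Df; case: (rep_mkc x) => ->; case: (rep_mkc y) => ->; rewrite ?dl_complL ?dl_complR.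
Qed.

Lemma fadjE x y : folded_adj (mkc x) (mkc y) = (hd x y == 1) || (hd x (compl y) == 1).
Proof.
apply/idP/idP.
  case/existsP => u /andP [hu /existsP [v /andP [hv huv]]].
  move: hu hv huv; rewrite /= !inE => /orP[]/eqP-> /orP[]/eqP->.
  all: rewrite /cube_adj -/(hd _ _).
  - by move=> ->.
  - by move=> ->; rewrite orbT.
  - by rewrite hd_compl -hd_complr => ->; rewrite orbT.
  - by rewrite hd_compl2 => ->.
case/orP => h; apply/existsP; exists x; rewrite /= !inE eqxx /=; apply/existsP.
  by exists y; rewrite !inE eqxx.
by exists (compl y); rewrite !inE eqxx orbT.
Qed.

Lemma Df0 A : Df A A = 0.
Proof. by rewrite /Df /dl hd_xx min0n. Qed.

Lemma Dfpos A B : Df A B = 0 -> A = B.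
Proof.
have [x ->] := mkcP A; have [y ->] := mkcP B; rewrite Df_mkc /dl => h.
have := hd_le x y; case: (posnP (hd x y)) => [/hd0 -> //|hpos] hle.
have h2 : hd x (compl y) = 0 by rewrite hd_complr; lia.
by rewrite -(mkc_compl y) -(hd0 h2).
Qed.

Lemma Dfstep A B D : folded_adj B D -> Df A D <= (Df A B).+1.
Proof.
have [x ->] := mkcP A; have [y ->] := mkcP B; have [z ->] := mkcP D.
have key : forall z', hd y z' = 1 -> dl x z' <= (dl x y).+1.
  move=> z' h; rewrite /dl; have := hd_tri x y z'; have := hd_tri x z' y.
  rewrite (hd_sym z' y) h; have := hd_le x y; have := hd_le x z'; lia.
rewrite fadjE => /orP[] /eqP h; rewrite !Df_mkc.
  exact: key.
by rewrite -dl_complR; apply: key.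
Qed.

Lemma pick_rep x y : exists x', mkc x' = mkc x /\ hd x' y = dl x y.
Proof.
case: (leqP (hd x y) (k - hd x y)) => h.
  by exists x; split => //; rewrite /dl; lia.
exists (compl x); split; first exact: mkc_compl.
rewrite hd_compl /dl; lia.
Qed.

Lemma Dfex A B : 0 < Df A B -> exists D, folded_adj A D /\ Df D B < Df A B.
Proof.
have [x ->] := mkcP A; have [y ->] := mkcP B; rewrite !Df_mkc => hpos.
have [x' [hx' hd']] := pick_rep x y.
have [i hi] : exists i, i \in [set i | x' i != y i].
  by apply/set0Pn; rewrite -card_gt0 -/(hd _ _) hd'.
have hS : [set i] \subset [set i | x' i != y i] by rewrite sub1set.
exists (mkc (upd x' y [set i])); rewrite -hx' fadjE hd_upd1 // cards1 eqxx; split => //.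
rewrite Df_mkc; apply: leq_ltn_trans (geq_minl _ _) _.
rewrite hd_upd2 // cards1; lia.
Qed.

Lemma fdist A B n : dist_eq (@folded_adj k) A B n = (Df A B == n).
Proof. exact: (dist_eqP Df0 Dfpos Dfstep Dfex). Qed.

Lemma Df_tri A B D : Df A D <= Df A B + Df B D.
Proof. exact: (D_tri Df0 Dfpos Dfstep Dfex). Qed.

Section Lift.
Variable g : {perm C}.
Hypothesis hgc : forall u, g (compl u) = compl (g u).
Hypothesis hgd : forall u v, hd (g u) (g v) = hd u v.
Definition ffn (A : FV) : FV := mkc (g (rep A)).
Lemma ffn_mkc x : ffn (mkc x) = mkc (g x).
Proof. by rewrite /ffn; case: (rep_mkc x) => -> //; rewrite hgc mkc_compl. Qed.
Lemma ffn_inj : injective ffn.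
Proof.
move=> A B; have [x ->] := mkcP A; have [y ->] := mkcP B; rewrite !ffn_mkc.
case/mkc_eq => [/perm_inj -> // | ].
by rewrite -hgc => /perm_inj ->; rewrite mkc_compl.
Qed.
Definition flift : {perm FV} := perm ffn_inj.
Lemma flift_mkc x : flift (mkc x) = mkc (g x). Proof. by rewrite permE ffn_mkc. Qed.
Lemma flift_aut : is_aut (@folded_adj k) flift.
Proof.
move=> A B; have [x ->] := mkcP A; have [y ->] := mkcP B.
by rewrite !flift_mkc !fadjE -hgc !hgd.
Qed.
End Lift.

Definition fbase : FV := mkc (zero k).
Definition fcanon i : FV := mkc (cv k i).

Lemma fVT A : exists g : {perm FV}, is_aut (@folded_adj k) g /\ g A = fbase.
Proof.
have [x ->] := mkcP A.
have hgc : forall u, ctr x (compl u) = compl (ctr x u) by move=> u; rewrite ctr_compl.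
have hgd : forall u v, hd (ctr x u) (ctr x v) = hd u v by move=> u v; rewrite hd_ctr.
exists (flift hgc); split; first exact: flift_aut.
by rewrite flift_mkc ctr_self.
Qed.

Lemma fc0 : fcanon 0 = fbase.
Proof. by rewrite /fcanon cv0. Qed.

Lemma fLOC l a : Df fbase (fcanon l) = l -> folded_adj (fcanon l) a -> Df fbase a = l.+1 ->
  exists h : {perm FV}, [/\ is_aut (@folded_adj k) h, h fbase = fbase,
     forall i, i <= l -> h (fcanon i) = fcanon i & h a = fcanon l.+1].
Proof.
have [w ->] := mkcP a => _ hadj.
have [w' [hw' h1]] : exists w', mkc w' = mkc w /\ hd (cv k l) w' = 1.
  move: hadj; rewrite /fcanon fadjE; case/orP => /eqP h; first by exists w.
  by exists (compl w); rewrite mkc_compl.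
rewrite -hw' /fbase /fcanon !Df_mkc /dl => hd'.
have hw : l < weight w' by rewrite wE hd_sym; lia.
have [hk [s [hs1 hs2]]] := loc1 h1 hw.
have hgc : forall u, cperm s (compl u) = compl (cperm s u) by move=> u; rewrite cperm_compl.
have hgd : forall u v : C, hd (cperm s u) (cperm s v) = hd u v by move=> u v; rewrite !cpermE hd_cfun.
exists (flift hgc); split.
- exact: flift_aut.
- by rewrite /fbase flift_mkc cpermE cfun_zero.
- by move=> i hi; rewrite /fcanon flift_mkc cpermE hs1.
- by rewrite flift_mkc cpermE hs2.
Qed.

Theorem folded_gt : geodesic_transitive (@folded_adj k).
Proof. exact: (canon_gt Df0 Dfpos Dfstep Dfex fVT fc0 fLOC). Qed.
End Folded.


Section HF.
Variable k : nat.
Hypothesis hk : ~~ odd k.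
Notation C := (cube k).
Notation FV := (folded_vtx k).
Notation EF := (even_folded k).
Notation compl := (@cube_compl k).

Lemma w_le (x : C) : weight x <= k.
Proof. by rewrite wE hd_le. Qed.

Lemma odd_compl (x : C) : odd (weight (compl x)) = odd (weight x).
Proof. by rewrite w_compl oddB ?w_le // (negbTE hk). Qed.

Lemma ev_mkc (x : C) : [exists y in val (mkc x), ~~ odd (weight y)] = ~~ odd (weight x).
Proof.
apply/existsP/idP => [[y /andP[]] | h].
  by rewrite /= !inE => /orP[]/eqP-> //; rewrite odd_compl.
by exists x; rewrite /= !inE eqxx.
Qed.

Lemma evP (A : EF) : exists x, val A = mkc x /\ ~~ odd (weight x).
Proof.
have [x hx] := mkcP (val A); exists x; split => //.
by rewrite -ev_mkc -hx; exact: (valP A).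
Qed.

Lemma hf_adjE (A B : EF) : halved_folded_adj A B = (Df (val A) (val B) == 2).
Proof. exact: fdist. Qed.

Lemma dl_sym (x y : C) : dl x y = dl y x.
Proof. by rewrite /dl hd_sym. Qed.

Lemma ev_dl (x y : C) : ~~ odd (weight x) -> ~~ odd (weight y) -> ~~ odd (dl x y).
Proof.
move=> hx hy; have h1 : ~~ odd (hd x y) by rewrite hd_parity (negbTE hx) (negbTE hy).
have h2 : ~~ odd (k - hd x y) by rewrite oddB ?hd_le // (negbTE hk) (negbTE h1).
by have [->|->] : dl x y = hd x y \/ dl x y = k - hd x y by rewrite /dl; lia.
Qed.

Lemma ev_Df (A B : EF) : ~~ odd (Df (val A) (val B)).
Proof.
have [x [-> hx]] := evP A; have [y [-> hy]] := evP B; rewrite Df_mkc; exact: ev_dl.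
Qed.

Lemma half_ev n : ~~ odd n -> n = (n %/ 2) * 2.
Proof. by move=> h; rewrite divnK // dvdn2. Qed.

Definition DH (A B : EF) := Df (val A) (val B) %/ 2.

Lemma DH0 A : DH A A = 0. Proof. by rewrite /DH Df0. Qed.

Lemma DHpos A B : DH A B = 0 -> A = B.
Proof.
rewrite /DH => h; apply: val_inj; apply: Dfpos.
have := half_ev (ev_Df A B); lia.
Qed.

Lemma DHstep A B D : halved_folded_adj B D -> DH A D <= (DH A B).+1.
Proof.
rewrite hf_adjE /DH => /eqP h; have := Df_tri (val A) (val B) (val D); rewrite h; lia.
Qed.

Lemma DHex A B : 0 < DH A B -> exists D, halved_folded_adj A D /\ DH D B < DH A B.
Proof.
have [x [hAx hx]] := evP A; have [y [hBy hy]] := evP B.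
rewrite /DH hAx hBy Df_mkc => hpos.
have [x' [hx' hd']] := pick_rep x y.
have hx'e : ~~ odd (weight x') by rewrite -ev_mkc hx' ev_mkc.
have hpos2 : 1 < hd x' y by lia.
rewrite /hd in hpos2.
set S0 := [set i | x' i != y i] in hpos2 *.
have [i hi] : exists i, i \in S0 by apply/set0Pn; rewrite -card_gt0; lia.
have [i' hi'] : exists i', i' \in S0 :\ i.
  apply/set0Pn; rewrite -card_gt0; have := cardsD1 i S0; rewrite hi; lia.
move: hi'; rewrite !inE => /andP[hii' hi'S].
have hS : [set i; i'] \subset S0 by rewrite subUset !sub1set hi inE hi'S.
have hc2 : #|[set i; i']| = 2 by rewrite cards2 eq_sym hii'.
set z := upd x' y [set i; i'].
have hxz : hd x' z = 2 by rewrite /z hd_upd1 // hc2.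
have hzy : hd z y = hd x' y - 2 by rewrite /z hd_upd2 // hc2.
have hze : ~~ odd (weight z).
  have := hd_parity x' z; rewrite hxz /= (negbTE hx'e) /=; by move=> <-.
have hev : [exists y0 in val (mkc z), ~~ odd (weight y0)] by rewrite ev_mkc.
have hdlzy : dl z y <= hd x' y - 2 by rewrite -hzy /dl geq_minl.
have hdlxz : dl x' z <= 2 by rewrite -hxz /dl geq_minl.
have htri := Df_tri (mkc x') (mkc z) (mkc y); rewrite !Df_mkc in htri.
have hdl' : dl x' y = dl x y by rewrite -Df_mkc hx' Df_mkc.
exists (exist _ (mkc z) hev); rewrite hf_adjE /= hAx Df_mkc Df_mkc; split.
  apply/eqP; have : dl x' z = dl x z by rewrite -Df_mkc hx' Df_mkc.
  lia.
have := half_ev (ev_dl hze hy); have := half_ev (ev_dl hx hy); lia.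
Qed.

Section Lift.
Variable g : {perm C}.
Hypothesis hgc : forall u, g (compl u) = compl (g u).
Hypothesis hgd : forall u v, hd (g u) (g v) = hd u v.
Hypothesis hgp : forall u, odd (weight (g u)) = odd (weight u).
Lemma ev_flift (A : EF) : [exists y in val (flift hgc (val A)), ~~ odd (weight y)].
Proof. by have [x [hx hev]] := evP A; rewrite hx flift_mkc ev_mkc hgp. Qed.
Definition hfn (A : EF) : EF := exist _ (flift hgc (val A)) (ev_flift A).
Lemma hfn_inj : injective hfn.
Proof. by move=> A B /(congr1 val) /= /perm_inj /val_inj. Qed.
Definition hlift : {perm EF} := perm hfn_inj.
Lemma hlift_val A : val (hlift A) = flift hgc (val A). Proof. by rewrite permE. Qed.
Lemma hlift_aut : is_aut (@halved_folded_adj k) hlift.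
Proof.
move=> A B; rewrite /halved_folded_adj !hlift_val dist_aut //; exact: flift_aut.
Qed.
End Lift.

Lemma zero_evf : [exists y in val (mkc (zero k)), ~~ odd (weight y)].
Proof. by rewrite ev_mkc wE hd_xx. Qed.
Definition hfbase : EF := exist _ (mkc (zero k)) zero_evf.
Lemma cv_evf i : [exists y in val (mkc (cv k (2 * i))), ~~ odd (weight y)].
Proof.
rewrite ev_mkc w_cv.
have [->|->] : minn (2 * i) k = 2 * i \/ minn (2 * i) k = k by lia.
  by rewrite oddM.
by [].
Qed.
Definition hfcanon i : EF := exist _ (mkc (cv k (2 * i))) (cv_evf i).

Lemma hfVT A : exists g : {perm EF}, is_aut (@halved_folded_adj k) g /\ g A = hfbase.
Proof.
have [x [hx hxe]] := evP A.
have hgc : forall u, ctr x (compl u) = compl (ctr x u) by move=> u; rewrite ctr_compl.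
have hgd : forall u v, hd (ctr x u) (ctr x v) = hd u v by move=> u v; rewrite hd_ctr.
have hgp : forall u, odd (weight (ctr x u)) = odd (weight u).
  by move=> u; rewrite odd_ctr (negbTE hxe) addbF.
exists (hlift hgc hgp); split; first exact: hlift_aut.
by apply: val_inj; rewrite hlift_val hx flift_mkc ctr_self.
Qed.

Lemma hfc0 : hfcanon 0 = hfbase.
Proof. by apply: val_inj; rewrite /= muln0 cv0. Qed.

Lemma hfLOC l a : DH hfbase (hfcanon l) = l -> halved_folded_adj (hfcanon l) a ->
  DH hfbase a = l.+1 ->
  exists h : {perm EF}, [/\ is_aut (@halved_folded_adj k) h, h hfbase = hfbase,
     forall i, i <= l -> h (hfcanon i) = hfcanon i & h a = hfcanon l.+1].
Proof.
move=> _; have [w [hw hwe]] := evP a.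
rewrite hf_adjE /DH /= hw Df_mkc => /eqP h2.
have [w' [hw' hd']] := pick_rep w (cv k (2 * l)).
rewrite -hw' Df_mkc => hDa.
have h1 : hd (cv k (2 * l)) w' = 2 by rewrite hd_sym hd' dl_sym.
have hwl : (2 * l).+2 <= weight w'.
  by rewrite wE hd_sym; have := geq_minl (hd (zero k) w') (k - hd (zero k) w'); rewrite -/(dl _ _); lia.
have [hk2 [s [hs1 hs2]]] := loc2 h1 hwl.
have hgc : forall u, cperm s (compl u) = compl (cperm s u) by move=> u; rewrite cperm_compl.
have hgd : forall u v : C, hd (cperm s u) (cperm s v) = hd u v by move=> u v; rewrite !cpermE hd_cfun.
have hgp : forall u : C, odd (weight (cperm s u)) = odd (weight u) by move=> u; rewrite w_cperm.
exists (hlift hgc hgp); split.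
- exact: hlift_aut.
- by apply: val_inj; rewrite hlift_val /= flift_mkc cpermE cfun_zero.
- move=> i hi; apply: val_inj; rewrite hlift_val /= flift_mkc cpermE hs1 //; lia.
- apply: val_inj; rewrite hlift_val hw -hw' flift_mkc cpermE hs2 /=.
  by congr (mkc (cv k _)); lia.
Qed.

Theorem hfolded_gt : geodesic_transitive (@halved_folded_adj k).
Proof. exact: (canon_gt DH0 DHpos DHstep DHex hfVT hfc0 hfLOC). Qed.
End HF.

Theorem proposition3p7 :
  (forall k m : nat, 2 <= m -> geodesic_transitive (@hamming_adj k m)) /\
  (forall k : nat, geodesic_transitive (@halved_cube_adj k)) /\
  (forall k : nat, geodesic_transitive (@folded_adj k)) /\
  (forall k : nat, ~~ odd k ->
     geodesic_transitive (@halved_folded_adj k)).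
Proof.
split; [|split; [|split]].
- move=> k [|[|m]] // _.
  exact: (@ham_gt k _ ord0 (Ordinal (isT : 1 < m.+2)) isT).
- move=> k; exact: halved_gt.
- move=> k; exact: folded_gt.
- move=> k hk; exact: hfolded_gt.
Qed.
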